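(* Let $k$ be an odd integer with $k\ge 5$, let $D$ be a strong $k$-quasi-transitive digraph with $\mathrm{diam}(D)\ge k+2$, let $u,v\in V(D)$ with $d(u,v)=k+2$, and let $P=x_0x_1\ldots x_{k+2}$ be a shortest $(u,v)$-path with $x_0=u$, $x_{k+2}=v$. Let $O(P)=\{x_1,x_3,\ldots,x_{k+2}\}$ and $E(P)=\{x_0,x_2,\ldots,x_{k+1}\}$. If there exist two distinct vertices $x_i,x_j$ both in $E(P)$ or both in $O(P)$ that are adjacent, then $D[V(P)]$ is a semicomplete digraph and $x_s\rightarrow x_t$ for all indices $0\le t$, $s\le k+2$ with $1\le t+1<s$.
   Context: All digraphs are finite, without loops or multiple arcs (opposite arcs allowed). $x\rightarrow y$ means $xy\in A(D)$; $x,y$ are adjacent if $x\rightarrow y$ or $y\rightarrow x$. For $k\ge 2$, $D$ is $k$-quasi-transitive if for every path $x_0x_1\ldots x_k$ of length $k$, $x_0$ and $x_k$ are adjacent. $d(x,y)$ is the length of a shortest $(x,y)$-path, $\mathrm{diam}(D)=\max_{x,y}d(x,y)$. $D[S]$ is the induced subdigraph. A semicomplete digraph is one in which every two distinct vertices are adjacent. *)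

(* Defs.v *)
From mathcomp Require Import all_boot.
Set Implicit Arguments. Unset Strict Implicit. Unset Printing Implicit Defensive.

(* A digraph is a finite vertex type V with an arc relation A : rel V,
   irreflexive (no loops); opposite arcs are allowed. *)

Definition adjacent (V : finType) (A : rel V) (x y : V) : Prop :=
  A x y \/ A y x.

Definition is_path (V : finType) (A : rel V) (y : nat -> V) (n : nat) : Prop :=
  (forall i, i < n -> A (y i) (y i.+1)) /\
  (forall i j, i <= n -> j <= n -> y i = y j -> i = j).

Definition k_quasi_transitive (V : finType) (A : rel V) (k : nat) : Prop :=
  forall y : nat -> V, is_path A y k -> adjacent A (y 0) (y k).

Definition strong (V : finType) (A : rel V) : Prop :=
  forall x y : V, connect A x y.

Definition has_path (V : finType) (A : rel V) (x y : V) (n : nat) : Prop :=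
  exists p : nat -> V, [/\ p 0 = x, p n = y & is_path A p n].

Definition dist_eq (V : finType) (A : rel V) (x y : V) (n : nat) : Prop :=
  has_path A x y n /\ forall m, m < n -> ~ has_path A x y m.

Definition diam_ge (V : finType) (A : rel V) (n : nat) : Prop :=
  exists x y : V, forall m, m < n -> ~ has_path A x y m.

(* Main.v *)
Require Import Defs.
From mathcomp Require Import all_boot zify.
Set Implicit Arguments. Unset Strict Implicit. Unset Printing Implicit Defensive.

Definition rseq (rs : seq (nat*nat)) : seq nat :=
  flatten [seq iota r.1 (r.2 - r.1).+1 | r <- rs].

Fixpoint rok (R : rel nat) (n : nat) (rs : seq (nat*nat)) : bool :=
  match rs with
  | [::] => true
  | r :: rs' => [&& r.1 <= r.2, r.2 <= n,
      (if rs' is r' :: _ then (r'.2 < r.1) && R r.2 r'.1 else true) & rok R n rs']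
  end.

Lemma size_rseq rs : size (rseq rs) = sumn [seq (r.2 - r.1).+1 | r <- rs].
Proof. by elim: rs => //= r rs IH; rewrite /rseq /= size_cat size_iota -IH. Qed.

Lemma path_iota (R : rel nat) n (hf : forall i, i < n -> R i i.+1) a m :
  a + m <= n -> path R a (iota a.+1 m).
Proof.
elim: m a => //= m IH a h; rewrite hf; last by lia.
by rewrite IH //; lia.
Qed.

Lemma last_iota a m : last a (iota a.+1 m) = a + m.
Proof. by elim: m a => [|m IH] a /=; [rewrite addn0 | rewrite IH addnS]. Qed.

Lemma rseq_props (R : rel nat) n (hf : forall i, i < n -> R i i.+1) rs r :
  rok R n (r :: rs) ->
  exists s', [/\ rseq (r :: rs) = r.1 :: s', path R r.1 s', uniq (r.1 :: s'),
     all (fun i => i <= r.2) (r.1 :: s') & last r.1 s' = (last r rs).2].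
Proof.
have Ei : forall a m, a :: iota a.+1 m = iota a m.+1 by [].
elim: rs r => [|r' rs IH] [a b].
  rewrite /= andbT => /andP [hab hbn].
  exists (iota a.+1 (b - a)); split.
  - by rewrite /rseq /= cats0.
  - apply: (path_iota hf); lia.
  - by change (uniq (iota a (b - a).+1)); rewrite iota_uniq.
  - change (all (fun i => i <= b) (iota a (b - a).+1)); apply/allP => i; rewrite mem_iota; lia.
  - rewrite /= last_iota; lia.
move=> /and4P [/= hab hbn /andP [hlt hR] hrest] /=.
have [s2 [e2 p2 u2 a2 l2]] := IH r' hrest.
exists (iota a.+1 (b - a) ++ r'.1 :: s2); split.
- have -> : rseq ((a, b) :: r' :: rs) = iota a (b - a).+1 ++ rseq (r' :: rs) by [].
  by rewrite e2.
- rewrite cat_path last_iota /= p2 andbT (path_iota hf) /=; last by lia.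
  have -> : a + (b - a) = b by lia.
  by [].
- change (uniq ((a :: iota a.+1 (b - a)) ++ r'.1 :: s2)).
  rewrite cat_uniq Ei iota_uniq u2; apply/and3P; split => //.
  apply/hasPn => i /(allP a2) hi; rewrite mem_iota; lia.
- change (all (leq^~ b) ((a :: iota a.+1 (b - a)) ++ r'.1 :: s2)).
  rewrite all_cat; apply/andP; split.
    rewrite Ei; apply/allP => i; rewrite mem_iota /=; lia.
  apply/allP => i /(allP a2) /=; lia.
- by rewrite last_cat /= l2.
Qed.

Definition Good (R : rel nat) (k : nat) : Prop :=
  [/\ forall i, i < k.+2 -> R i i.+1,
      forall s : seq nat, size s = k.+1 -> uniq s -> all (fun i => i <= k.+2) s ->
        path R (head 0 s) (behead s) -> R (head 0 s) (last 0 s) || R (last 0 s) (head 0 s)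
    & forall i j, j <= k.+2 -> i.+1 < j -> ~~ R i j].

Lemma derive R k (G : Good R k) c d r rs : r.1 = c -> (last r rs).2 = d -> d.+1 < c ->
  rok R k.+2 (r :: rs) -> sumn [seq (q.2 - q.1).+1 | q <- r :: rs] = k.+1 -> R c d.
Proof.
case: G => hf hp hn e1 e2 hdc hok hsum.
have [s' [e p u a l]] := rseq_props hf hok.
have hb : r.1 <= k.+2.
  by move: hok => /= /and4P [h1 h2 _ _]; apply: leq_trans h2.
have hsz : size (r.1 :: s') = k.+1 by rewrite -e size_rseq hsum.
have hr2 : r.2 <= k.+2 by move: hok => /= /and4P [].
have hall : all (fun i => i <= k.+2) (r.1 :: s').
  by apply/allP => i /(allP a) hi; apply: leq_trans hi hr2.
have := hp _ hsz u hall p; rewrite /= l e1 e2 => /orP [] // h.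
by move: (hn d c); rewrite h -e1; move/(_ hb); rewrite e1; move/(_ hdc).
Qed.

Lemma derive' R k (G : Good R k) c d r rs : r.1 = c -> (last r rs).2 = d -> c.+1 < d ->
  rok R k.+2 (r :: rs) -> sumn [seq (q.2 - q.1).+1 | q <- r :: rs] = k.+1 -> R d c.
Proof.
case: G => hf hp hn e1 e2 hdc hok hsum.
have [s' [e p u a l]] := rseq_props hf hok.
have hsz : size (r.1 :: s') = k.+1 by rewrite -e size_rseq hsum.
have hr2 : r.2 <= k.+2 by move: hok => /= /and4P [].
have hall : all (fun i => i <= k.+2) (r.1 :: s').
  by apply/allP => i /(allP a) hi; apply: leq_trans hi hr2.
have hd : d <= k.+2 by rewrite -e2 -l; apply: (allP hall); rewrite /= mem_last.
have := hp _ hsz u hall p; rewrite /= l e1 e2 => /orP [] // h.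
by move: (hn c d); rewrite h; move/(_ hd hdc).
Qed.

Ltac go G r rs :=
  apply: (derive G (r:=r) (rs:=rs)); [by [] | by [] | lia | rewrite /=; repeat (apply/andP; split); try done; try lia | rewrite /=; lia].
Ltac go' G r rs :=
  apply: (derive' G (r:=r) (rs:=rs)); [by [] | by [] | lia | rewrite /=; repeat (apply/andP; split); try done; try lia | rewrite /=; lia].


Lemma base R k (G : Good R k) (hk5 : 5 <= k) : [/\ R k 0, R k.+1 1 & R k.+2 2].
Proof.
split.
- go' G (0, k) (@nil (nat*nat)).
- go' G (1, k.+1) (@nil (nat*nat)).
- go' G (2, k.+2) (@nil (nat*nat)).
Qed.

Lemma phase1 R k (G : Good R k) (hk : k %% 2 = 1) (hk5 : 5 <= k) :
  forall c d, (c - d) %% 2 = 1 -> d + 3 <= c -> c <= k.+2 -> R c d.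
Proof.
have [b0 b1 b2] := base G hk5.
have n0 : R k.+2 0.
  go G (k.+2, k.+2) [:: (2, k); (0, 0)].
have g3 : forall i, i + 3 <= k.+2 -> R (i + 3) i.
  move=> i hi; go G (i + 3, k.+2) [:: (0, i)].
have c0 : forall y, y %% 2 = 1 -> 3 <= y -> y <= k.+2 -> R y 0.
  elim/ltn_ind => y IH hy h3 hyn.
  have [->|ne] := eqVneq y 3; first by apply: (g3 0); lia.
  go G (y, k.+2) [:: (2, y - 2); (0, 0)].
  apply: IH; lia.
have c1 : forall y, y %% 2 = 0 -> 4 <= y -> y <= k.+1 -> R y 1.
  elim/ltn_ind => y IH hy h3 hyn.
  have [->|ne] := eqVneq y 4; first by apply: (g3 1); lia.
  go G (y, k.+2) [:: (2, y - 2); (1, 1)].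
  apply: IH; lia.
have rn : forall m z, z + m = k.+2 -> z %% 2 = 0 -> 3 <= m -> R k.+2 z.
  elim/ltn_ind => m IH z hz hp h3.
  have [em|ne] := eqVneq m 3.
    have := g3 z; rewrite (_ : z + 3 = k.+2); last lia; apply; lia.
  go G (k.+2, k.+2) [:: (z + 2, k); (0, z)].
  apply: (IH (m - 2)); lia.
have rn1 : forall m z, z + m = k.+1 -> z %% 2 = 1 -> 3 <= m -> R k.+1 z.
  elim/ltn_ind => m IH z hz hp h3.
  have [em|ne] := eqVneq m 3.
    have := g3 z; rewrite (_ : z + 3 = k.+1); last lia; apply; lia.
  go G (k.+1, k.+1) [:: (z + 2, k); (0, z)].
  apply: (IH (m - 2)); lia.
have c2 : forall y, y %% 2 = 1 -> 5 <= y -> y <= k.+2 -> R y 2.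
  move=> y hy h5 hyn.
  have [->|ne] := eqVneq y 5.
    go G (5, k.+2) [:: (0, 2)].
  go G (y, k.+2) [:: (4, y - 2); (0, 2)].
  - apply: (rn (k.+2 - 4)); lia.
  - apply: c0; lia.
move=> c d hp h3 hc.
have [e|ne0] := eqVneq d 0; first by subst d; apply: c0; lia.
have [e|ne1] := eqVneq d 1; first by subst d; apply: c1; lia.
have [e|nen] := eqVneq c k.+2; first by subst c; apply: (rn (k.+2 - d)); lia.
have [e|nen1] := eqVneq c k.+1; first by subst c; apply: (rn1 (k.+1 - d)); lia.
have [hd|hd] := boolP (d %% 2 == 0).
  go G (c, k.+1) [:: (d.+1, c - 1); (1, d)].
  - apply: (rn1 (k - d)); lia.
  - apply: c1; lia.
go G (c, k.+2) [:: (d.+1, c - 1); (2, d)].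
- apply: (rn (k.+1 - d)); lia.
- apply: c2; lia.
Qed.

Lemma phase2 R k (G : Good R k) (hk : k %% 2 = 1) (hk5 : 5 <= k) (O1 : R k.+2 1) :
  forall c d, d.+1 < c -> c <= k.+2 -> R c d.
Proof.
have od := phase1 G hk hk5.
have O2 : R k.+1 0.
  go G (k.+1, k.+2) [:: (1, k - 2); (0, 0)]; apply: od; lia.
have g2 : forall c d, d + 2 = c -> c <= k.+2 -> R c d.
  move=> c d e hc.
  have [e2|ne] := eqVneq c 2.
    subst c; have -> : d = 0 by lia.
    go G (2, k.+1) [:: (0, 0)].
  go G (c, k.+2) [:: (1, d)].
have c0 : forall y, y %% 2 = 0 -> 2 <= y -> y <= k.+1 -> R y 0.
  elim/ltn_ind => y IH hy h3 hyn.
  have [e|ne] := eqVneq y 2; first by subst y; apply: g2.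
  go G (y, k.+2) [:: (2, y - 2); (0, 0)].
  - apply: od; lia.
  - apply: IH; lia.
have c1 : forall y, y %% 2 = 1 -> 3 <= y -> y <= k.+2 -> R y 1.
  elim/ltn_ind => y IH hy h3 hyn.
  have [e|ne] := eqVneq y 3; first by subst y; apply: g2.
  go G (y, k.+2) [:: (2, y - 2); (1, 1)].
  - apply: od; lia.
  - apply: IH; lia.
have c2 : forall y, y %% 2 = 0 -> 4 <= y -> y <= k.+1 -> R y 2.
  move=> y hy h3 hyn.
  have [e|ne] := eqVneq y 4; first by subst y; apply: g2; lia.
  go G (y, k.+2) [:: (4, y - 2); (0, 2)].
  - apply: od; lia.
  - apply: c0; lia.
move=> c d h2 hc.
have [ho|he] := boolP ((c - d) %% 2 == 1); first by apply: od; lia.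
have [e|ne] := eqVneq c (d + 2); first by apply: g2; lia.
have [e|ne0] := eqVneq d 0; first by subst d; apply: c0; lia.
have [e|ne1] := eqVneq d 1; first by subst d; apply: c1; lia.
have [e|ne2] := eqVneq d 2; first by subst d; apply: c2; lia.
have [hd|hd] := boolP (d %% 2 == 0).
  go G (c, k.+1) [:: (d.+1, c - 1); (1, d)].
  - apply: od; lia.
  - apply: c1; lia.
go G (c, k.+2) [:: (d.+1, c - 1); (2, d)].
- apply: od; lia.
- apply: c2; lia.
Qed.

Lemma getO1 R k (G : Good R k) (hk : k %% 2 = 1) (hk5 : 5 <= k) a b
  (hp : (a - b) %% 2 = 0) (hab : b.+1 < a) (han : a <= k.+2) (hR : R a b) : R k.+2 1.
Proof.
have od := phase1 G hk hk5.
have fromO2 : R k.+1 0 -> R k.+2 1.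
  move=> O2; go G (k.+2, k.+2) [:: (4, k.+1); (0, 1)]; apply: od; lia.
have [ha|ha] := boolP (a %% 2 == 1).
  have [e|nea] := eqVneq a k.+2.
    subst a; have [e|neb] := eqVneq b 1; first by subst b.
    have [e|neb3] := eqVneq b 3.
      subst b; go G (k.+2, k.+2) [:: (3, k); (0, 1)]; apply: od; lia.
    go G (k.+2, k.+2) [:: (b, k); (2, b - 2); (0, 1)]; apply: od; lia.
  have [e|neb] := eqVneq b 1.
    subst b; have [e|nek] := eqVneq a k.
      subst a; go G (k.+2, k.+2) [:: (2, k); (1, 1)]; apply: od; lia.
    go G (k.+2, k.+2) [:: (a.+1, k); (2, a); (1, 1)]; apply: od; lia.
  have [e|nek] := eqVneq a k; have [e'|neb3] := eqVneq b 3.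
  - subst a b; go G (k.+2, k.+2) [:: (4, k); (3, 3); (0, 1)]; apply: od; lia.
  - subst a; go G (k.+2, k.+2) [:: (b.+1, k); (b, b); (2, b - 2); (0, 1)];
      apply: od; lia.
  - subst b; go G (k.+2, k.+2) [:: (a.+1, k); (4, a); (3, 3); (0, 1)];
      apply: od; lia.
  - go G (k.+2, k.+2) [:: (a.+1, k); (b.+1, a); (b, b); (2, b - 2); (0, 1)];
      apply: od; lia.
have [e|neb0] := eqVneq b 0.
  subst b.
  have [e|ne1] := eqVneq a k.+1.
    subst a; go G (k.+2, k.+2) [:: (4, k.+1); (0, 1)]; apply: od; lia.
  have [e|ne2] := eqVneq a k.-1.
    subst a; go G (k.+2, k.+2) [:: (2, k.-1); (0, 1)]; apply: od; lia.
  go G (k.+2, k.+2) [:: (a.+2, k); (2, a); (0, 1)]; apply: od; lia.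
have [e|ne1] := eqVneq a k.+1.
  subst a.
  have [e|nb1] := eqVneq b k.-1.
    subst b; apply: fromO2.
    go G (k.+1, k.+1) [:: (k.-1, k.-1); (1, k - 2); (0, 0)]; apply: od; lia.
  have [e|nb3] := eqVneq b (k - 3).
    subst b; apply: fromO2.
    have [e|nk5] := eqVneq k 5.
      subst k; go G (6, 6) [:: (2, 5); (0, 0)]; apply: od; lia.
    go G (k.+1, k.+1) [:: (k - 3, k.-1); (1, k - 4); (0, 0)]; apply: od; lia.
  have [e|nb2] := eqVneq b 2.
    subst b; go G (k.+2, k.+2) [:: (6, k.+1); (2, 3); (0, 1)]; apply: od; lia.
  go G (k.+2, k.+2) [:: (b + 4, k.+1); (b, b.+1); (2, b.-1); (0, 1)]; apply: od; lia.
have [e|ne2] := eqVneq a k.-1.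
  subst a; have [e|nb2] := eqVneq b 2.
    subst b; go G (k.+2, k.+2) [:: (4, k.-1); (2, 3); (0, 1)]; apply: od; lia.
  go G (k.+2, k.+2) [:: (b.+2, k.-1); (b, b.+1); (2, b.-1); (0, 1)]; apply: od; lia.
have [e|nb2] := eqVneq b 2.
  subst b; go G (k.+2, k.+2) [:: (a.+2, k); (4, a); (2, 3); (0, 1)]; apply: od; lia.
go G (k.+2, k.+2) [:: (a.+2, k); (b.+2, a); (b, b.+1); (2, b.-1); (0, 1)]; apply: od; lia.
Qed.

Theorem lemma2p4 (V : finType) (A : rel V) (k : nat)
  (hirr : irreflexive A)
  (hk_odd : odd k) (hk5 : 5 <= k)
  (hqt : k_quasi_transitive A k) (hstrong : strong A)
  (hdiam : diam_ge A (k + 2))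
  (u v : V) (huv : dist_eq A u v (k + 2))
  (x : nat -> V) (hx0 : x 0 = u) (hxv : x (k + 2) = v)
  (hP : is_path A x (k + 2))
  (hpar : exists i j, [/\ i <= k + 2, j <= k + 2, i <> j, odd i = odd j
                        & adjacent A (x i) (x j)]) :
  (forall i j, i <= k + 2 -> j <= k + 2 -> i <> j -> adjacent A (x i) (x j)) /\
  (forall s t, s <= k + 2 -> t.+1 < s -> A (x s) (x t)).
Proof.
rewrite addn2 in huv hxv hP hpar *.
case: hP => hfw hinj.
have hk : k %% 2 = 1 by rewrite modn2 hk_odd.
pose R : rel nat := fun i j => A (x i) (x j).
have nofw : forall i j, j <= k.+2 -> i.+1 < j -> ~~ R i j.
  move=> i j hj hij; apply/negP => hA.
  pose d := j - i.+1.
  pose p := fun m => x (if m <= i then m else m + d).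
  pose L := k.+2 - d.
  apply: (huv.2 L); first by rewrite /L /d; lia.
  exists p; split.
  - by rewrite /p leq0n.
  - rewrite /p; have -> : (L <= i) = false by rewrite /L /d; lia.
    by rewrite /L -hxv; congr x; rewrite /d; lia.
  split.
  - move=> m hm; rewrite /p.
    case: (ltngtP m i) => hmi.
    + apply: hfw; lia.
    + have -> : m.+1 + d = (m + d).+1 by rewrite addSn.
      apply: hfw; rewrite /L /d in hm *; lia.
    + subst m.
      by have -> : i.+1 + d = j by rewrite /d; lia.
  - move=> m1 m2 h1 h2; rewrite /p => e.
    have := hinj _ _ _ _ e.
    case: ifP => c1; case: ifP => c2; rewrite /L /d in h1 h2 *; lia.
have G : Good R k.
  split.
  - exact: hfw.
  - move=> s hs hu ha hp.
    case: s hs hu ha hp => [//|h t] hs hu ha hp.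
    move: hs => /= [hs]; rewrite [head _ _]/= [behead _]/= in hp.
    pose y := fun i => x (nth 0 (h :: t) i).
    have hy : is_path A y k.
      split.
      + move=> i hi; rewrite /y /=.
        move/(pathP 0): hp => /(_ i); rewrite hs => /(_ hi).
        by case: i hi.
      + move=> i j hi hj e.
        have hn : forall m, m <= k -> nth 0 (h :: t) m <= k.+2.
          move=> m hm; apply: (allP ha); apply: mem_nth => /=; lia.
        have := hinj _ _ (hn _ hi) (hn _ hj) e.
        by move/eqP; rewrite nth_uniq //= ?hs ?ltnS //; move/eqP.
    have := hqt _ hy; rewrite /y /= -hs.
    have -> : nth 0 (h :: t) (size t) = last h t by rewrite (nth_last 0 (h :: t)).
    by case=> hh; apply/orP; [left | right].
  - exact: nofw.
have [i [j [hi hj hne hodd hadj]]] := hpar.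
have hmod : i %% 2 = j %% 2 by rewrite !modn2 hodd.
have all : forall c d, d.+1 < c -> c <= k.+2 -> R c d.
  have gen : forall a b, b < a -> a <= k.+2 -> a %% 2 = b %% 2 ->
      adjacent A (x a) (x b) -> forall c d, d.+1 < c -> c <= k.+2 -> R c d.
    move=> a b hba ha hab hadj'.
    have hab2 : b.+1 < a by lia.
    have hR : R a b.
      case: hadj' => // h; move: (nofw b a ha hab2); by rewrite /R h.
    apply: (phase2 G hk hk5); apply: (getO1 G hk hk5 (a := a) (b := b)) => //; lia.
  case: (ltngtP i j) => hij.
  - apply: (gen j i) => //; case: hadj => h; by [right | left].
  - exact: (gen i j).
  - by [].
split.
- move=> a b ha hb hab.
  case: (ltngtP a b) => h.
  + have [e|ne] := eqVneq b a.+1; first by subst b; left; apply: hfw; lia.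
    right; apply: all => //; lia.
  + have [e|ne] := eqVneq a b.+1; first by subst a; right; apply: hfw; lia.
    left; apply: all => //; lia.
  + by [].
- move=> s t hs hts; exact: all.
Qed.
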